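(* For every $\mathbb{R}$-tree $T$ there exist a simplicial tree $\Gamma$ and a $(1,2)$-quasi-isometry $\Gamma\to T$.
   Context: An $\mathbb{R}$-tree is a metric space in which any two points are joined by a unique topological arc, which is a geodesic. A simplicial tree is a 1-dimensional simplicial complex which is an $\mathbb{R}$-tree for the path metric with edges isometric to $[0,1]$. A map $f:(X,d_X)\to(Y,d_Y)$ is a $(1,C)$-quasi-isometry if $d_X(a,b)-C\leqslant d_Y(f(a),f(b))\leqslant d_X(a,b)+C$ for all $a,b$ and every $y\in Y$ is within distance $C$ of $f(X)$. *)

(* Defs.v *)
From Stdlib Require Import Reals Lra List Classical ClassicalEpsilon.
Open Scope R_scope.

Definition is_metric {X : Type} (d : X -> X -> R) : Prop :=
  (forall x y, 0 <= d x y) /\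
  (forall x y, d x y = 0 <-> x = y) /\
  (forall x y, d x y = d y x) /\
  (forall x y z, d x z <= d x y + d y z).

(* A topological arc from x to y: a continuous injective map [0,1] -> X
   (a continuous injection from a compact space into a metric space is an
   embedding, so its image is a topological arc). *)
Definition is_arc {X : Type} (d : X -> X -> R) (g : R -> X) (x y : X) : Prop :=
  g 0 = x /\ g 1 = y /\
  (forall s, 0 <= s <= 1 -> forall eps, 0 < eps -> exists delta, 0 < delta /\
     forall s', 0 <= s' <= 1 -> Rabs (s - s') < delta -> d (g s) (g s') < eps) /\
  (forall s t, 0 <= s <= 1 -> 0 <= t <= 1 -> g s = g t -> s = t).

Definition is_geodesic {X : Type} (d : X -> X -> R) (g : R -> X) (x y : X) : Prop :=
  g 0 = x /\ g (d x y) = y /\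
  (forall s t, 0 <= s <= d x y -> 0 <= t <= d x y -> d (g s) (g t) = Rabs (s - t)).

(* R-tree: any two points are joined by a unique topological arc, and this
   arc is (the image of) a geodesic: there is a geodesic from x to y and every
   arc from x to y has the same image as it. *)
Definition R_tree {X : Type} (d : X -> X -> R) : Prop :=
  is_metric d /\
  forall x y, exists g, is_geodesic d g x y /\
    forall a, is_arc d a x y ->
      forall z, (exists s, 0 <= s <= 1 /\ a s = z) <->
                (exists t, 0 <= t <= d x y /\ g t = z).

(* A graph with vertex type V and edge type E; each edge e is an (arbitrarily
   oriented) segment from [src e] to [tgt e]. *)
Section Graph.
Context {V E : Type} (src tgt : E -> V).

Definition adj (u w : V) : Prop :=
  exists e, (src e = u /\ tgt e = w) \/ (src e = w /\ tgt e = u).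

Inductive walk : V -> V -> nat -> Prop :=
| walk_nil u : walk u u 0
| walk_cons u w v n : adj u w -> walk w v n -> walk u v (S n).

(* combinatorial distance (least length of a walk; meaningful when connected) *)
Definition gdist (u v : V) : nat :=
  epsilon (inhabits 0%nat)
    (fun n => walk u v n /\ forall m, walk u v m -> (n <= m)%nat).

(* Points of the geometric realization: vertices, or interior points of an
   edge e at parameter t in (0,1) (distance t from src e, 1 - t from tgt e).
   Each edge is thus a copy of [0,1]. *)
Inductive rpoint : Type :=
| RV : V -> rpoint
| RE : E -> {t : R | 0 < t < 1} -> rpoint.

Definition ends (p : rpoint) : list (V * R) :=
  match p with
  | RV v => (v, 0) :: nil
  | RE e t => (src e, proj1_sig t) :: (tgt e, 1 - proj1_sig t) :: nil
  end.

Definition minl (l : list R) : R :=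
  match l with nil => 0 | c :: cs => fold_right Rmin c cs end.

(* length of shortest path leaving through vertices *)
Definition via (p q : rpoint) : R :=
  minl (flat_map (fun a => map (fun b => snd a + INR (gdist (fst a) (fst b)) + snd b)
                                (ends q)) (ends p)).

Definition pdist (p q : rpoint) : R :=
  match p, q with
  | RE e t, RE e' s =>
      if excluded_middle_informative (e = e')
      then Rabs (proj1_sig t - proj1_sig s) else via p q
  | _, _ => via p q
  end.

(* Simplicial tree: a 1-dimensional simplicial complex (no loops, no multiple
   edges), connected (so the path metric is defined), which is an R-tree for
   its path metric. *)
Definition simplicial_tree : Prop :=
  (forall e, src e <> tgt e) /\
  (forall e e', ((src e = src e' /\ tgt e = tgt e') \/
                 (src e = tgt e' /\ tgt e = src e')) -> e = e') /\
  (forall u v, exists n, walk u v n) /\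
  R_tree pdist.

End Graph.

Arguments RV {V E}.
Arguments RE {V E}.

Definition quasi_isometry_1C {X Y : Type} (dX : X -> X -> R) (dY : Y -> Y -> R)
    (f : X -> Y) (C : R) : Prop :=
  (forall a b, dX a b - C <= dY (f a) (f b) /\ dY (f a) (f b) <= dX a b + C) /\
  (forall y, exists x, dY y (f x) <= C).

(* Main.v *)
Require Import Defs.
From Stdlib Require Import Reals Lra Lia List Classical ClassicalEpsilon ZArith.
Open Scope R_scope.


Lemma CL {X : Type} (a : R -> X) (P : X -> Prop) s1 s2 : s1 <= s2 ->
  (forall s, s1 <= s <= s2 -> exists delta, 0 < delta /\
     forall s', s1 <= s' <= s2 -> Rabs (s - s') < delta -> (P (a s) <-> P (a s'))) ->
  P (a s1) -> P (a s2).
Proof.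
  intros H12 Hloc H1.
  set (E := fun u => s1 <= u <= s2 /\ forall v, s1 <= v <= u -> P (a v)).
  assert (HB : bound E) by (exists s2; intros u [Hu _]; lra).
  assert (HE : exists u, E u).
  { exists s1; split; [lra|]. intros v Hv. replace v with s1 by lra. exact H1. }
  destruct (completeness E HB HE) as [sg [Hub Hlub]].
  assert (Hs1 : s1 <= sg) by (apply Hub; destruct HE; unfold E; split; [lra|]; intros v Hv; replace v with s1 by lra; exact H1).
  assert (Hs2 : sg <= s2) by (apply Hlub; intros u [Hu _]; lra).
  destruct (Hloc sg (conj Hs1 Hs2)) as [dl [Hdl Hn]].
  assert (Hu : exists u, E u /\ sg - dl < u).
  { apply NNPP; intro Hno.
    assert (sg <= sg - dl); [|lra].
    apply Hlub. intros u Hu. destruct (Rle_dec u (sg - dl)) as [h|h]; [exact h|].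
    exfalso; apply Hno; exists u; split; [exact Hu|lra]. }
  destruct Hu as [u [[Hu1 Hu2] Hu3]].
  assert (Hus : u <= sg) by (apply Hub; split; assumption).
  assert (HPs : P (a sg)).
  { apply (proj2 (Hn u ltac:(lra) ltac:(rewrite Rabs_right; lra))). apply Hu2; lra. }
  assert (Hw : E (Rmin s2 (sg + dl/2))).
  { split. { unfold Rmin; destruct Rle_dec; lra. }
    intros v Hv. destruct (Rle_dec v u) as [h|h]. { apply Hu2; lra. }
    assert (Hv2 : v <= sg + dl / 2) by (unfold Rmin in Hv; destruct Rle_dec in Hv; lra).
    assert (Hv3 : v <= s2) by (unfold Rmin in Hv; destruct Rle_dec in Hv; lra).
    apply (proj1 (Hn v ltac:(lra) ltac:(unfold Rabs; destruct Rcase_abs; lra))). exact HPs. }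
  apply Hub in Hw.
  assert (sg = s2) by (unfold Rmin in Hw; destruct Rle_dec in Hw; lra).
  subst sg. exact HPs.
Qed.

Lemma four (a b c e f g : R) :
  Rmin a b <= e -> Rmin a e <= b -> Rmin b e <= a ->
  Rmin a c <= f -> Rmin a f <= c -> Rmin c f <= a ->
  Rmin b c <= g -> Rmin b g <= c -> Rmin c g <= b ->
  Rmin e f <= g -> Rmin e g <= f -> Rmin f g <= e ->
  Rmin (f - a - c) (g - c - b) <= e - a - b.
Proof.
  unfold Rmin; intros;
  repeat match goal with
  | H : context [Rle_dec ?x ?y] |- _ => destruct (Rle_dec x y)
  | |- context [Rle_dec ?x ?y] => destruct (Rle_dec x y)
  end; lra.
Qed.

Lemma four_gen {X : Type} (m : X -> X -> R) (Hs : forall p q, m p q = m q p)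
  (Hu : forall p q r, Rmin (m p q) (m q r) <= m p r) w x y z :
  Rmin (m x z - m w x - m w z) (m z y - m w z - m w y) <= m x y - m w x - m w y.
Proof.
  Ltac six Hu a b c := pose proof (Hu a b c); pose proof (Hu a c b); pose proof (Hu b a c);
     pose proof (Hu b c a); pose proof (Hu c a b); pose proof (Hu c b a).
  six Hu w x y. six Hu w x z. six Hu w y z. six Hu x y z.
  rewrite (Hs x w), (Hs y w), (Hs z w), (Hs y x), (Hs z x), (Hs y z) in *.
  apply four; first [assumption | rewrite Rmin_comm; assumption].
Qed.


Section Hyp.
Variable X : Type.
Variable d : X -> X -> R.
Hypothesis d_nonneg : forall x y, 0 <= d x y.
Hypothesis d_eq0 : forall x y, d x y = 0 -> x = y.
Hypothesis d_refl : forall x, d x x = 0.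
Hypothesis d_sym : forall x y, d x y = d y x.
Hypothesis d_tri : forall x y z, d x z <= d x y + d y z.
Definition gp w x y := (d w x + d w y - d x y) / 2.
Hypothesis G4 : forall w x y z, Rmin (gp w x z) (gp w z y) <= gp w x y.
Hypothesis geo : forall x y, exists g, is_geodesic d g x y.

Lemma gp_sym w x y : gp w x y = gp w y x.
Proof. unfold gp; rewrite (d_sym x y); lra. Qed.

Lemma gp_nonneg w x y : 0 <= gp w x y.
Proof. unfold gp. pose proof (d_tri x w y). rewrite (d_sym x w) in H. lra. Qed.

Lemma gp_trans z x y w : 0 < gp z x y -> 0 < gp z y w -> 0 < gp z x w.
Proof.
  intros H1 H2. pose proof (G4 z x w y).
  unfold Rmin in H; destruct Rle_dec in H; lra.
Qed.

Lemma SL (a : R -> X)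
  (Hc : forall s, 0 <= s <= 1 -> forall eps, 0 < eps -> exists delta, 0 < delta /\
     forall s', 0 <= s' <= 1 -> Rabs (s - s') < delta -> d (a s) (a s') < eps)
  s1 s2 z : 0 <= s1 -> s1 <= s2 -> s2 <= 1 -> gp z (a s1) (a s2) = 0 ->
  exists s, s1 <= s <= s2 /\ a s = z.
Proof.
  intros h1 h2 h3 Hg. apply NNPP; intro Hno.
  assert (Hne : forall s, s1 <= s <= s2 -> a s <> z).
  { intros s Hs He; apply Hno; exists s; auto. }
  assert (Hpos : forall s, s1 <= s <= s2 -> 0 < d z (a s)).
  { intros s Hs. destruct (Rle_lt_or_eq_dec 0 (d z (a s)) (d_nonneg _ _)) as [h|h]; auto.
    exfalso; apply (Hne s Hs). symmetry; apply d_eq0; auto. }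
  assert (HP := CL a (fun w => 0 < gp z w (a s1)) s1 s2 h2).
  assert (0 < gp z (a s2) (a s1)).
  { apply HP.
    - intros s Hs. destruct (Hc s ltac:(lra) (d z (a s)) (Hpos s Hs)) as [dl [Hdl Hd]].
      exists dl; split; auto. intros s' Hs' Hss'.
      assert (Hd' := Hd s' ltac:(lra) Hss').
      assert (Hw : 0 < gp z (a s) (a s')).
      { unfold gp. pose proof (d_nonneg z (a s')). lra. }
      split; intro Hq.
      + apply (gp_trans z (a s') (a s) (a s1)); auto. rewrite gp_sym; auto.
      + apply (gp_trans z (a s) (a s') (a s1)); auto.
    - unfold gp. rewrite d_refl. pose proof (Hpos s1 ltac:(lra)). lra. }
  rewrite gp_sym in H. lra.
Qed.

Lemma geo_gp g x y t : is_geodesic d g x y -> 0 <= t <= d x y -> gp (g t) x y = 0.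
Proof.
  intros [H0 [H1 H2]] Ht. unfold gp.
  pose proof (H2 0 t ltac:(pose proof (d_nonneg x y); lra) Ht) as A.
  pose proof (H2 t (d x y) Ht ltac:(pose proof (d_nonneg x y); lra)) as B.
  rewrite H0 in A. rewrite H1 in B. rewrite (d_sym (g t) x), A, B.
  rewrite Rabs_left1 by lra. rewrite Rabs_left1 by lra. lra.
Qed.

Lemma on_geo g x y z : is_geodesic d g x y -> gp z x y = 0 ->
  exists t, 0 <= t <= d x y /\ g t = z.
Proof.
  intros Hg Hz. pose proof Hg as [H0 [H1 H2]].
  unfold gp in Hz.
  assert (Ht : 0 <= d x z <= d x y).
  { pose proof (d_nonneg x z); pose proof (d_nonneg z y). rewrite (d_sym z x) in Hz. lra. }
  exists (d x z); split; auto.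
  pose proof (H2 0 (d x z) ltac:(pose proof (d_nonneg x y); lra) Ht) as A.
  pose proof (H2 (d x z) (d x y) Ht ltac:(pose proof (d_nonneg x y); lra)) as B.
  rewrite H0 in A. rewrite H1 in B.
  rewrite Rabs_left1 in A by lra. rewrite Rabs_left1 in B by lra.
  pose proof (G4 x z (g (d x z)) y) as C. unfold gp in C.
  rewrite (d_sym (g (d x z)) y) in B.
  rewrite (d_sym z x) in Hz.
  assert (d z (g (d x z)) <= 0).
  { unfold Rmin in C; destruct Rle_dec in C; lra. }
  symmetry; apply d_eq0. pose proof (d_nonneg z (g (d x z))). lra.
Qed.

Theorem hyp_rtree : R_tree d.
Proof.
  split.
  { split; [auto|split; [|split; auto]]. intros x y; split; [apply d_eq0|intros ->; auto]. }
  intros x y. destruct (geo x y) as [g Hg]. exists g; split; auto.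
  intros a [Ha0 [Ha1 [Hc Hinj]]] z. split.
  - intros [s [Hs Hz]].
    destruct (Rle_lt_or_eq_dec 0 (gp z x y) (gp_nonneg z x y)) as [Hr|Hr];
      [|apply on_geo; auto].
    exfalso. set (r := gp z x y) in *.
    destruct (geo z x) as [h Hh].
    assert (Hrz : r <= d z x).
    { unfold r, gp. pose proof (d_tri z x y). idtac. pose proof (d_nonneg x y). lra. }
    pose proof Hh as [Hh0 [Hh1 Hh2]].
    set (z' := h (r/2)).
    assert (Hzz' : d z z' = r/2).
    { unfold z'. rewrite <- Hh0 at 1. rewrite Hh2 by lra. rewrite Rabs_left1; lra. }
    assert (Hz'x : d z' x = d z x - r/2).
    { unfold z'. rewrite <- Hh1 at 1. rewrite Hh2 by lra. rewrite Rabs_left1; lra. }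
    assert (G1 : gp z' z x = 0).
    { unfold gp. rewrite (d_sym z' z). lra. }
    assert (G2 : gp z' z y = 0).
    { pose proof (G4 z z' y x) as C. unfold gp in C. unfold r, gp in Hr.

      pose proof (d_tri z z' y).
      assert (d z y = d z z' + d z' y).
      { unfold Rmin in C; destruct Rle_dec in C; unfold r, gp in Hzz', Hrz; unfold r, gp in *; lra. }
      unfold gp. rewrite (d_sym z' z). lra. }
    destruct (SL a Hc 0 s z' ltac:(lra) ltac:(lra) ltac:(lra)) as [s1 [Hs1 E1]].
    { rewrite Ha0, Hz. rewrite gp_sym. exact G1. }
    destruct (SL a Hc s 1 z' ltac:(lra) ltac:(lra) ltac:(lra)) as [s2 [Hs2 E2]].
    { rewrite Ha1, Hz. exact G2. }
    assert (Hzne : z' <> z).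
    { intro He. rewrite He, d_refl in Hzz'. lra. }
    assert (s1 <> s) by (intro; subst; congruence).
    assert (s2 <> s) by (intro; subst; congruence).
    assert (s1 = s2) by (apply Hinj; [lra|lra|congruence]).
    lra.
  - intros [t [Ht Hz]].
    destruct (SL a Hc 0 1 z ltac:(lra) ltac:(lra) ltac:(lra)) as [s [Hs E]].
    { rewrite Ha0, Ha1, <- Hz. apply geo_gp; auto. }
    exists s; auto.
Qed.
End Hyp.


Section Rooted.
Variable X : Type.
Variable d : X -> X -> R.
Variable l : X -> R.
Variable mu : X -> X -> R.
Hypothesis Hd : forall p q, d p q = l p + l q - 2 * mu p q.
Hypothesis Hsym : forall p q, mu p q = mu q p.
Hypothesis Hle : forall p q, mu p q <= l p.
Hypothesis Hrefl : forall p, mu p p = l p.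
Hypothesis H0 : forall p q, 0 <= mu p q.
Hypothesis Hum : forall p q r, Rmin (mu p q) (mu q r) <= mu p r.
Hypothesis Hinj : forall p q, mu p q = l p -> l p = l q -> p = q.
Hypothesis Hanc : forall p r, 0 <= r <= l p ->
  exists a, l a = r /\ forall q, mu a q = Rmin r (mu p q).

Lemma um3 p q r : Rmin (mu p q) (mu q r) <= mu p r.
Proof. apply Hum. Qed.

Lemma r_G4 : forall w x y z, Rmin (gp X d w x z) (gp X d w z y) <= gp X d w x y.
Proof.
  intros w x y z. unfold gp. rewrite !Hd.
  pose proof (four_gen mu Hsym Hum w x y z) as F.
  unfold Rmin in F |- *.
  repeat match goal with
  | H : context [Rle_dec ?x ?y] |- _ => destruct (Rle_dec x y)
  | |- context [Rle_dec ?x ?y] => destruct (Rle_dec x y)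
  end; lra.
Qed.

Lemma r_nonneg p q : 0 <= d p q.
Proof. rewrite Hd. pose proof (Hle p q) as U1; pose proof (Hle q p) as U2; rewrite Hsym in U2; lra. Qed.

Lemma r_eq0 p q : d p q = 0 -> p = q.
Proof.
  rewrite Hd. intro E. pose proof (Hle p q) as U1; pose proof (Hle q p) as U2; rewrite Hsym in U2.
  apply Hinj; lra.
Qed.

Lemma r_refl p : d p p = 0.
Proof. rewrite Hd, Hrefl; lra. Qed.

Lemma r_dsym p q : d p q = d q p.
Proof. rewrite !Hd, Hsym; lra. Qed.

Lemma r_tri p q r : d p r <= d p q + d q r.
Proof.
  rewrite !Hd. pose proof (Hum p q r) as U. pose proof (Hle q p) as U1. pose proof (Hle q r) as U2.
  rewrite (Hsym q p) in U1. unfold Rmin in U; destruct Rle_dec in U; lra.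
Qed.

Lemma anc_fun : exists anc : X -> R -> X, forall p r, 0 <= r <= l p ->
  l (anc p r) = r /\ forall q, mu (anc p r) q = Rmin r (mu p q).
Proof.
  set (P := fun p r a => 0 <= r <= l p -> l a = r /\ forall q, mu a q = Rmin r (mu p q)).
  assert (forall p r, exists a, P p r a).
  { intros p r. destruct (classic (0 <= r <= l p)) as [h|h].
    - destruct (Hanc p r h) as [a Ha]; exists a; intros _; auto.
    - exists p; intro; contradiction. }
  exists (fun p r => proj1_sig (constructive_indefinite_description _ (H p r))).
  intros p r. exact (proj2_sig (constructive_indefinite_description _ (H p r))).
Qed.

Lemma r_geo : forall x y, exists g, is_geodesic d g x y.
Proof.
  destruct anc_fun as [anc Ha].
  intros p q. set (m := mu p q).
  assert (Hm0 : 0 <= m) by apply H0.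
  assert (Hmp : m <= l p) by apply Hle.
  assert (Hmq : m <= l q) by (unfold m; rewrite Hsym; apply Hle).
  assert (HL : d p q = l p + l q - 2 * m) by apply Hd.
  exists (fun s => if Rle_dec s (l p - m) then anc p (l p - s) else anc q (2 * m + s - l p)).
  assert (Hap : anc p (l p) = p).
  { destruct (Ha p (l p) ltac:(split; [pose proof (H0 p p); rewrite Hrefl in *; lra|lra])) as [A B].
    apply Hinj; rewrite ?A; auto. rewrite B, Hrefl. unfold Rmin; destruct Rle_dec; lra. }
  assert (Haq : anc q (l q) = q).
  { destruct (Ha q (l q) ltac:(split; [pose proof (H0 q q); rewrite Hrefl in *; lra|lra])) as [A B].
    apply Hinj; rewrite ?A; auto. rewrite B, Hrefl. unfold Rmin; destruct Rle_dec; lra. }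
  split; [|split].
  - destruct Rle_dec; [|lra]. rewrite Rminus_0_r; auto.
  - rewrite HL. destruct Rle_dec.
    + assert (l q = m) by lra.
      replace (l p - (l p + l q - 2 * m)) with m by lra.
      destruct (Ha p m ltac:(lra)) as [A B].
      apply Hinj. rewrite B. fold m. rewrite A. unfold Rmin; destruct Rle_dec; lra.
      lra.
    + replace (2 * m + (l p + l q - 2 * m) - l p) with (l q) by lra. auto.
  - rewrite HL. intros s t Hs Ht. cbv beta.
    assert (Hmix : forall r1 r2, m <= r1 <= l p -> m <= r2 <= l q ->
              mu (anc p r1) (anc q r2) = m).
    { intros r1 r2 h1 h2. destruct (Ha p r1 ltac:(lra)) as [A1 B1].
      destruct (Ha q r2 ltac:(lra)) as [A2 B2].
      rewrite B1, Hsym, B2. fold m. rewrite (Hsym q p). fold m.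
      unfold Rmin; repeat destruct Rle_dec; lra. }
    assert (Hsame : forall u r1 r2, 0 <= r1 <= l u -> 0 <= r2 <= l u ->
              d (anc u r1) (anc u r2) = Rabs (r1 - r2)).
    { intros u r1 r2 h1 h2. destruct (Ha u r1 h1) as [A1 B1].
      destruct (Ha u r2 h2) as [A2 B2]. rewrite Hd, A1, A2, B1, Hsym, B2, Hrefl.
      unfold Rmin, Rabs; repeat destruct Rle_dec; destruct Rcase_abs; lra. }
    destruct (Rle_dec s (l p - m)) as [h1|h1]; destruct (Rle_dec t (l p - m)) as [h2|h2].
    + rewrite Hsame by lra. rewrite Rabs_minus_sym. f_equal; lra.
    + destruct (Ha p (l p - s) ltac:(lra)) as [A1 B1].
      destruct (Ha q (2 * m + t - l p) ltac:(lra)) as [A2 B2].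
      rewrite Hd, A1, A2, Hmix by lra. rewrite Rabs_left1 by lra. lra.
    + destruct (Ha p (l p - t) ltac:(lra)) as [A1 B1].
      destruct (Ha q (2 * m + s - l p) ltac:(lra)) as [A2 B2].
      rewrite r_dsym, Hd, A1, A2, Hmix by lra. rewrite Rabs_right by lra. lra.
    + rewrite Hsame by lra. f_equal; lra.
Qed.

Theorem rooted_rtree : R_tree d.
Proof.
  apply hyp_rtree.
  - exact r_nonneg.
  - exact r_eq0.
  - exact r_refl.
  - exact r_dsym.
  - exact r_tri.
  - exact r_G4.
  - exact r_geo.
Qed.
End Rooted.


Section TF.
Variable T : Type.
Variable d : T -> T -> R.
Hypothesis Hrt : R_tree d.
Variable o : T.

Lemma dnn x y : 0 <= d x y. Proof. apply (proj1 Hrt). Qed.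
Lemma deq x y : d x y = 0 <-> x = y. Proof. apply (proj1 (proj2 (proj1 Hrt))). Qed.
Lemma dsym x y : d x y = d y x. Proof. apply (proj1 (proj2 (proj2 (proj1 Hrt)))). Qed.
Lemma dtri x y z : d x z <= d x y + d y z. Proof. apply (proj2 (proj2 (proj2 (proj1 Hrt)))). Qed.
Lemma drefl x : d x x = 0. Proof. apply deq; auto. Qed.

Definition geo x y : R -> T := proj1_sig (constructive_indefinite_description _ (proj2 Hrt x y)).
Lemma geo_spec x y : is_geodesic d (geo x y) x y /\
    forall a, is_arc d a x y ->
      forall z, (exists s, 0 <= s <= 1 /\ a s = z) <->
                (exists t, 0 <= t <= d x y /\ geo x y t = z).
Proof. exact (proj2_sig (constructive_indefinite_description _ (proj2 Hrt x y))). Qed.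

Lemma geo0 x y : geo x y 0 = x. Proof. apply (geo_spec x y). Qed.
Lemma geo1 x y : geo x y (d x y) = y. Proof. apply (geo_spec x y). Qed.
Lemma geod x y s t : 0 <= s <= d x y -> 0 <= t <= d x y -> d (geo x y s) (geo x y t) = Rabs (s - t).
Proof. apply (geo_spec x y). Qed.

Lemma CA u v c L1 L2 (p1 p2 : R -> T) : 0 <= L1 -> 0 <= L2 ->
  p1 0 = u -> p1 L1 = c -> p2 0 = c -> p2 L2 = v ->
  (forall s s', 0 <= s <= L1 -> 0 <= s' <= L1 -> d (p1 s) (p1 s') = Rabs (s - s')) ->
  (forall s s', 0 <= s <= L2 -> 0 <= s' <= L2 -> d (p2 s) (p2 s') = Rabs (s - s')) ->
  (forall s t, 0 <= s <= L1 -> 0 <= t <= L2 -> p1 s = p2 t -> s = L1 /\ t = 0) ->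
  exists tau, 0 <= tau <= d u v /\ geo u v tau = c.
Proof.
  intros hL1 hL2 E1 E2 E3 E4 I1 I2 Cr.
  destruct (Req_dec (L1 + L2) 0) as [hz|hz].
  { assert (L1 = 0) by lra. assert (L2 = 0) by lra. subst L1 L2.
    exists 0. split. pose proof (dnn u v); lra. rewrite geo0. congruence. }
  set (L := L1 + L2). assert (hL : 0 < L) by (unfold L; lra).
  set (a := fun s => if Rle_dec (s * L) L1 then p1 (s * L) else p2 (s * L - L1)).
  assert (Lip : forall s s', 0 <= s <= 1 -> 0 <= s' <= 1 -> d (a s) (a s') <= L * Rabs (s - s')).
  { assert (K : forall s s', 0 <= s <= 1 -> 0 <= s' <= 1 -> s <= s' -> d (a s) (a s') <= L * Rabs (s - s')).
    { intros s s' hs hs' hss. rewrite Rabs_left1 by lra. unfold a.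
      assert (0 <= s * L <= L) by (split; nra).
      assert (0 <= s' * L <= L) by (split; nra).
      assert (s * L <= s' * L) by nra.
      destruct (Rle_dec (s * L) L1); destruct (Rle_dec (s' * L) L1).
      - rewrite I1 by lra. rewrite Rabs_left1; nra.
      - pose proof (dtri (p1 (s * L)) c (p2 (s' * L - L1))) as D.
        assert (D1 : d (p1 (s * L)) c = L1 - s * L).
        { rewrite <- E2. rewrite I1 by lra. rewrite Rabs_left1; lra. }
        assert (D2 : d c (p2 (s' * L - L1)) = s' * L - L1).
        { rewrite <- E3. rewrite I2 by (unfold L in *; lra). rewrite Rabs_left1; lra. }
        nra.
      - lra.
      - rewrite I2 by (unfold L in *; lra). rewrite Rabs_left1; nra. }
    intros s s' hs hs'. destruct (Rle_dec s s'). apply K; auto.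
    rewrite dsym, Rabs_minus_sym. apply K; auto; lra. }
  assert (Harc : is_arc d a u v).
  { split; [|split; [|split]].
    - unfold a. rewrite Rmult_0_l. destruct Rle_dec; [auto|lra].
    - unfold a. rewrite Rmult_1_l. destruct Rle_dec.
      + assert (L2 = 0) by (unfold L in *; lra). subst L2. unfold L. rewrite Rplus_0_r. congruence.
      + replace (L - L1) with L2 by (unfold L; lra). auto.
    - intros s hs eps heps. exists (eps / L). split. apply Rdiv_lt_0_compat; auto.
      intros s' hs' hd. eapply Rle_lt_trans. apply Lip; auto.
      apply Rmult_lt_reg_l with (/ L). apply Rinv_0_lt_compat; auto.
      rewrite <- Rmult_assoc, Rinv_l by lra. rewrite Rmult_1_l. unfold Rdiv in hd. lra.
    - intros s t hs ht hst. unfold a in hst.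
      assert (0 <= s * L <= L) by (split; nra).
      assert (0 <= t * L <= L) by (split; nra).
      destruct (Rle_dec (s * L) L1); destruct (Rle_dec (t * L) L1).
      + assert (d (p1 (s * L)) (p1 (t * L)) = 0) by (rewrite hst; apply drefl).
        rewrite I1 in H1 by lra. assert (s * L = t * L).
        { destruct (Rcase_abs (s * L - t * L)); [rewrite Rabs_left in H1|rewrite Rabs_right in H1]; lra. }
        apply Rmult_eq_reg_r with L; lra.
      + destruct (Cr (s * L) (t * L - L1) ltac:(lra) ltac:(unfold L in *; lra) hst). lra.
      + destruct (Cr (t * L) (s * L - L1) ltac:(lra) ltac:(unfold L in *; lra) (eq_sym hst)). lra.
      + assert (d (p2 (s * L - L1)) (p2 (t * L - L1)) = 0) by (rewrite hst; apply drefl).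
        rewrite I2 in H1 by (unfold L in *; lra). assert (s * L = t * L).
        { destruct (Rcase_abs (s * L - L1 - (t * L - L1))); [rewrite Rabs_left in H1|rewrite Rabs_right in H1]; lra. }
        apply Rmult_eq_reg_r with L; lra. }
  destruct (proj1 (proj2 (geo_spec u v) a Harc c)) as [tau Ht].
  - exists (L1 / L). split. split. apply Rmult_le_pos; [lra|left; apply Rinv_0_lt_compat; lra].
    apply Rmult_le_reg_r with L; auto. unfold Rdiv. rewrite Rmult_assoc, Rinv_l by lra. unfold L; lra.
    unfold a. unfold Rdiv. rewrite Rmult_assoc, Rinv_l, Rmult_1_r by lra.
    destruct Rle_dec; [auto|lra].
  - exists tau; auto.
Qed.

Definition lam x := d o x.
Definition A y t := geo o y t.
Definition Gp a b := (lam a + lam b - d a b) / 2.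

Lemma lam_nn x : 0 <= lam x. Proof. apply dnn. Qed.
Lemma A0 y : A y 0 = o. Proof. apply geo0. Qed.
Lemma A_top y : A y (lam y) = y. Proof. apply geo1. Qed.
Lemma A_d y t t' : 0 <= t <= lam y -> 0 <= t' <= lam y -> d (A y t) (A y t') = Rabs (t - t').
Proof. apply geod. Qed.
Lemma A_lam y t : 0 <= t <= lam y -> lam (A y t) = t.
Proof.
  intros h. unfold lam. rewrite <- (A0 y) at 1. fold (lam y) in h.
  rewrite A_d by (pose proof (lam_nn y); lra). rewrite Rabs_left1; lra.
Qed.
Lemma A_dist y t : 0 <= t <= lam y -> d (A y t) y = lam y - t.
Proof.
  intros h. rewrite <- (A_top y) at 2. rewrite A_d by (pose proof (lam_nn y); lra).
  rewrite Rabs_left1; lra.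
Qed.

Lemma T1 x y : lam x + d x y = lam y -> A y (lam x) = x.
Proof.
  intros H. unfold lam in *.
  destruct (CA o y x (d o x) (d x y) (geo o x) (geo x y)) as [tau [Ht Hg]].
  - apply dnn. - apply dnn. - apply geo0. - apply geo1. - apply geo0. - apply geo1.
  - apply geod. - apply geod.
  - intros s t hs ht E.
    pose proof (geod o x 0 s ltac:(pose proof (dnn o x); lra) hs) as D1. rewrite geo0 in D1.
    pose proof (geod o x s (d o x) hs ltac:(pose proof (dnn o x); lra)) as D2. rewrite geo1 in D2.
    pose proof (geod x y 0 t ltac:(pose proof (dnn x y); lra) ht) as D3. rewrite geo0 in D3.
    pose proof (geod x y t (d x y) ht ltac:(pose proof (dnn x y); lra)) as D4. rewrite geo1 in D4.
    rewrite Rabs_left1 in D1, D2, D3, D4 by lra.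
    rewrite E in D1. pose proof (dtri o (geo x y t) y). lra.
  - pose proof (geod o y 0 tau ltac:(pose proof (dnn o y); lra) Ht) as D. rewrite geo0, Hg in D.
    rewrite Rabs_left1 in D by lra. unfold A. replace (d o x) with tau by lra. auto.
Qed.

Lemma A_trans y s t : 0 <= t -> t <= s -> s <= lam y -> A (A y s) t = A y t.
Proof.
  intros h1 h2 h3.
  assert (E : lam (A y t) = t) by (apply A_lam; lra).
  rewrite <- E at 1. apply T1. rewrite E, A_d by lra. rewrite A_lam by lra.
  rewrite Rabs_left1; lra.
Qed.

Lemma Gp_sym a b : Gp a b = Gp b a.
Proof. unfold Gp; rewrite dsym; lra. Qed.
Lemma Gp_le a b : Gp a b <= lam a.
Proof. unfold Gp, lam. pose proof (dtri o a b). lra. Qed.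
Lemma Gp_nn a b : 0 <= Gp a b.
Proof. unfold Gp, lam. pose proof (dtri a o b). rewrite (dsym a o) in H. lra. Qed.

Lemma common_G u v t : 0 <= t <= lam u -> t <= lam v -> A u t = A v t -> t <= Gp u v.
Proof.
  intros h1 h2 E. unfold Gp. pose proof (dtri u (A u t) v).
  rewrite (dsym u (A u t)), A_dist in H by lra. rewrite E, A_dist in H by lra. lra.
Qed.

Lemma T4 u v t : 0 <= t <= Gp u v -> A u t = A v t.
Proof.
  intros ht.
  set (mn := Rmin (lam u) (lam v)).
  assert (Hmu : mn <= lam u) by apply Rmin_l.
  assert (Hmv : mn <= lam v) by apply Rmin_r.
  assert (Hm0 : 0 <= mn) by (unfold mn, Rmin; destruct Rle_dec; apply lam_nn).
  set (S := fun t => 0 <= t <= mn /\ A u t = A v t).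
  assert (HB : bound S) by (exists mn; intros x [hx _]; lra).
  assert (HE : exists x, S x) by (exists 0; split; [lra|rewrite !A0; auto]).
  destruct (completeness S HB HE) as [sg [Hub Hlub]].
  assert (Hs0 : 0 <= sg) by (apply Hub; split; [lra|rewrite !A0; auto]).
  assert (Hsm : sg <= mn) by (apply Hlub; intros x [hx _]; lra).
  assert (Init : forall t t', S t -> 0 <= t' <= t -> A u t' = A v t').
  { intros t1 t' [h1 e1] h2. rewrite <- (A_trans u t1 t') by lra.
    rewrite <- (A_trans v t1 t') by lra. rewrite e1; auto. }
  assert (Hsg : A u sg = A v sg).
  { apply deq. destruct (Rle_lt_or_eq_dec 0 (d (A u sg) (A v sg)) (dnn _ _)) as [h|h]; [|auto].
    exfalso. set (D := d (A u sg) (A v sg)) in *.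
    assert (Hx : exists x, S x /\ sg - D / 4 < x).
    { apply NNPP; intro Hno. assert (sg <= sg - D / 4); [|lra].
      apply Hlub. intros x Hx. destruct (Rle_dec x (sg - D / 4)); auto.
      exfalso; apply Hno; exists x; split; auto; lra. }
    destruct Hx as [x [Sx hx]].
    assert (x <= sg) by (apply Hub; auto).
    destruct Sx as [hx1 ex].
    pose proof (dtri (A u sg) (A u x) (A v sg)).
    rewrite (A_d u sg x) in H0 by lra. rewrite ex in H0. rewrite (A_d v x sg) in H0 by lra.
    rewrite Rabs_right in H0 by lra. rewrite Rabs_left1 in H0 by lra.
    unfold D in *. lra. }
  assert (Hc : exists tau, 0 <= tau <= d u v /\ geo u v tau = A u sg).
  { apply (CA u v (A u sg) (lam u - sg) (lam v - sg)
             (fun s => A u (lam u - s)) (fun s => A v (sg + s))).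
    - lra. - lra.
    - rewrite Rminus_0_r. apply A_top.
    - f_equal; lra.
    - rewrite Rplus_0_r; auto.
    - replace (sg + (lam v - sg)) with (lam v) by lra. apply A_top.
    - intros s s' hs hs'. rewrite A_d by lra. rewrite Rabs_minus_sym. f_equal; lra.
    - intros s s' hs hs'. rewrite A_d by lra. f_equal; lra.
    - intros s t1 hs ht1 E.
      assert (L : lam u - s = sg + t1).
      { rewrite <- (A_lam u (lam u - s)) by lra. rewrite E. apply A_lam. lra. }
      destruct (Req_dec t1 0) as [z|nz]. { split; lra. }
      exfalso. assert (sg + t1 <= sg); [|lra].
      apply Hub. split; [unfold mn, Rmin; destruct Rle_dec; lra|]. rewrite <- L at 1. auto. }
  destruct Hc as [tau [Ht Hg]].
  pose proof (geod u v 0 tau ltac:(pose proof (dnn u v); lra) Ht) as D1.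
  pose proof (geod u v tau (d u v) Ht ltac:(pose proof (dnn u v); lra)) as D2.
  rewrite geo0, Hg in D1. rewrite geo1, Hg in D2.
  rewrite Rabs_left1 in D1, D2 by lra.
  rewrite dsym, A_dist in D1 by lra. rewrite Hsg, A_dist in D2 by lra.
  assert (Gp u v = sg) by (unfold Gp; lra).
  apply (Init sg t). split; [lra|auto]. lra.
Qed.

Definition fl (r : R) : nat := Z.to_nat (up r - 1).
Lemma fl_spec r : 0 <= r -> INR (fl r) <= r < INR (fl r) + 1.
Proof.
  intros h. destruct (archimed r) as [a b]. unfold fl.
  assert (0 <= up r - 1)%Z.
  { assert (IZR (up r) > 0) by lra. apply lt_0_IZR in H. lia. }
  rewrite INR_IZR_INZ, Z2Nat.id by auto. rewrite minus_IZR. simpl. lra.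
Qed.
Lemma fl_char r n : 0 <= r -> (INR n <= r <-> (n <= fl r)%nat).
Proof.
  intros h. pose proof (fl_spec r h). split; intro H1.
  - assert (INR n < INR (S (fl r))) by (rewrite S_INR; lra). apply INR_lt in H0. lia.
  - apply le_INR in H1. lra.
Qed.
Lemma fl_INR n : fl (INR n) = n.
Proof.
  pose proof (pos_INR n).
  apply Nat.le_antisymm.
  - pose proof (fl_spec (INR n) H) as [a b]. apply INR_le. lra.
  - apply fl_char; auto; lra.
Qed.

Definition V := {x : T | exists n : nat, lam x = INR n}.
Definition isE (p : V * V) : Prop :=
  lam (proj1_sig (snd p)) = lam (proj1_sig (fst p)) + 1 /\
  lam (proj1_sig (fst p)) + d (proj1_sig (fst p)) (proj1_sig (snd p)) = lam (proj1_sig (snd p)).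
Definition E := {p : V * V | isE p}.
Definition esrc (e : E) : V := fst (proj1_sig e).
Definition etgt (e : E) : V := snd (proj1_sig e).

Lemma Veq (a b : V) : proj1_sig a = proj1_sig b -> a = b.
Proof. destruct a, b; simpl; intro; subst; f_equal; apply proof_irrelevance. Qed.
Lemma Eeq (a b : E) : proj1_sig a = proj1_sig b -> a = b.
Proof. destruct a, b; simpl; intro; subst; f_equal; apply proof_irrelevance. Qed.

Definition K (a b : V) : nat := fl (Gp (proj1_sig a) (proj1_sig b)).
Lemma K_char a b n : INR n <= Gp (proj1_sig a) (proj1_sig b) <-> (n <= K a b)%nat.
Proof. apply fl_char, Gp_nn. Qed.
Definition nlev (a : V) : nat := K a a.
Lemma vlev (a : V) : lam (proj1_sig a) = INR (nlev a).
Proof.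
  destruct a as [x [n hn]]. unfold nlev, K; simpl.
  assert (Gp x x = lam x) by (unfold Gp; rewrite drefl; lra).
  rewrite H, hn, fl_INR; auto.
Qed.
Lemma K_sym a b : K a b = K b a.
Proof. unfold K; rewrite Gp_sym; auto. Qed.
Lemma K_le a b : (K a b <= nlev a)%nat.
Proof.
  apply INR_le. rewrite <- vlev. eapply Rle_trans; [|apply Gp_le].
  apply K_char; auto.
Qed.
Lemma K_Gp a b : INR (K a b) <= Gp (proj1_sig a) (proj1_sig b).
Proof. apply K_char; auto. Qed.

Lemma A_vert (y : V) j : lam (A (proj1_sig y) (INR (Nat.min j (nlev y)))) = INR (Nat.min j (nlev y)).
Proof.
  apply A_lam. split. apply pos_INR. rewrite vlev. apply le_INR. lia.
Qed.
Definition VA (y : V) (j : nat) : V :=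
  exist _ (A (proj1_sig y) (INR (Nat.min j (nlev y)))) (ex_intro _ _ (A_vert y j)).
Lemma VA_val y j : (j <= nlev y)%nat -> proj1_sig (VA y j) = A (proj1_sig y) (INR j).
Proof. intros h. simpl. f_equal. f_equal. lia. Qed.
Lemma VA_nlev y j : (j <= nlev y)%nat -> nlev (VA y j) = j.
Proof.
  intros h. apply INR_eq. rewrite <- vlev, VA_val by auto. apply A_lam.
  split. apply pos_INR. rewrite vlev. apply le_INR; auto.
Qed.
Lemma VA_top y : VA y (nlev y) = y.
Proof. apply Veq. rewrite VA_val by lia. rewrite <- vlev. apply A_top. Qed.
Lemma VA_trans y j k : (k <= j)%nat -> (j <= nlev y)%nat -> VA (VA y j) k = VA y k.
Proof.
  intros h1 h2. apply Veq. rewrite VA_val by (rewrite VA_nlev; lia).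
  rewrite VA_val by lia. rewrite VA_val by lia. apply A_trans.
  apply pos_INR. apply le_INR; auto. rewrite vlev. apply le_INR; auto.
Qed.

Lemma edge_lev e : nlev (etgt e) = S (nlev (esrc e)).
Proof.
  destruct e as [[x y] [h1 h2]]. unfold etgt, esrc; simpl in *.
  apply INR_eq. rewrite S_INR, <- !vlev. auto.
Qed.
Lemma edge_d e : d (proj1_sig (esrc e)) (proj1_sig (etgt e)) = 1.
Proof. destruct e as [[x y] [h1 h2]]. unfold etgt, esrc; simpl in *. lra. Qed.
Lemma edge_src e : esrc e = VA (etgt e) (nlev (esrc e)).
Proof.
  apply Veq. rewrite VA_val by (rewrite edge_lev; lia). rewrite <- vlev.
  symmetry. apply T1. destruct e as [[x y] [h1 h2]]. unfold etgt, esrc; simpl in *. auto.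
Qed.
Lemma edge_uniq e e' : etgt e = etgt e' -> e = e'.
Proof.
  intros h. assert (esrc e = esrc e').
  { rewrite (edge_src e), (edge_src e'). rewrite h.
    pose proof (edge_lev e); pose proof (edge_lev e'). rewrite h in H. f_equal. lia. }
  apply Eeq. destruct e as [[x y] p], e' as [[x' y'] p']. unfold etgt, esrc in *; simpl in *.
  subst; auto.
Qed.

Lemma Gp_down x y b : lam x + d x y = lam y -> Gp x b <= Gp y b.
Proof. intros h. unfold Gp. pose proof (dtri y x b). rewrite (dsym y x) in H. lra. Qed.
Lemma Gp_up x y b : lam x + d x y = lam y -> Gp y b <= Gp x b + d x y.
Proof. intros h. unfold Gp. pose proof (dtri x y b). lra. Qed.

Lemma K_edge1 e b : (K (esrc e) b <= K (etgt e) b)%nat.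
Proof.
  apply K_char. eapply Rle_trans; [apply K_Gp|]. apply Gp_down.
  destruct e as [[x y] [h1 h2]]. unfold etgt, esrc; simpl in *. auto.
Qed.
Lemma K_edge2 e b : (K (etgt e) b <= S (K (esrc e) b))%nat.
Proof.
  destruct (K (etgt e) b) eqn:Hk. lia. apply le_n_S. apply K_char.
  pose proof (K_Gp (etgt e) b). rewrite Hk, S_INR in H.
  pose proof (Gp_up (proj1_sig (esrc e)) (proj1_sig (etgt e)) (proj1_sig b)).
  rewrite edge_d in H0.
  destruct e as [[x y] [h1 h2]]. unfold etgt, esrc in *; simpl in *.
  assert (Gp (proj1_sig y) (proj1_sig b) <= Gp (proj1_sig x) (proj1_sig b) + 1) by (apply H0; auto).
  lra.
Qed.

Lemma K_anc y j b : (j <= nlev y)%nat -> K (VA y j) b = Nat.min j (K y b).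
Proof.
  intros hj. apply Nat.le_antisymm.
  - apply Nat.min_glb.
    + rewrite <- (VA_nlev y j) at 2 by auto. apply K_le.
    + apply K_char. eapply Rle_trans; [apply K_Gp|]. apply Gp_down.
      rewrite VA_val by auto. rewrite A_lam, A_dist. lra.
      split; [apply pos_INR|rewrite vlev; apply le_INR; auto].
      split; [apply pos_INR|rewrite vlev; apply le_INR; auto].
  - apply K_char. set (k := Nat.min j (K y b)).
    assert (hk1 : (k <= j)%nat) by apply Nat.le_min_l.
    assert (hk2 : (k <= K y b)%nat) by apply Nat.le_min_r.
    pose proof (K_le y b). pose proof (K_le b y). rewrite K_sym in H0.
    assert (E1 : A (proj1_sig y) (INR k) = A (proj1_sig b) (INR k)).
    { apply T4. split. apply pos_INR. apply K_char; auto. }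
    apply common_G.
    + rewrite VA_val by auto. rewrite A_lam. split. apply pos_INR. apply le_INR; auto.
      split. apply pos_INR. rewrite vlev. apply le_INR; auto.
    + rewrite vlev. apply le_INR. lia.
    + rewrite VA_val by auto. rewrite A_trans. auto. apply pos_INR. apply le_INR; auto.
      rewrite vlev; apply le_INR; auto.
Qed.

Lemma K_um a b c : (Nat.min (K a b) (K b c) <= K a c)%nat.
Proof.
  set (k := Nat.min (K a b) (K b c)).
  assert (h1 : (k <= K a b)%nat) by apply Nat.le_min_l.
  assert (h2 : (k <= K b c)%nat) by apply Nat.le_min_r.
  apply K_char. apply common_G.
  - split. apply pos_INR. rewrite vlev. apply le_INR. pose proof (K_le a b). lia.
  - rewrite vlev. apply le_INR. pose proof (K_le c b). rewrite K_sym in H. lia.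
  - transitivity (A (proj1_sig b) (INR k)).
    + apply T4. split. apply pos_INR. apply K_char; auto.
    + apply T4. split. apply pos_INR. apply K_char; auto.
Qed.

Lemma K_full a b : K a b = nlev a -> nlev a = nlev b -> a = b.
Proof.
  intros h1 h2. apply Veq. apply deq.
  pose proof (K_Gp a b). rewrite h1, <- vlev in H.
  pose proof (Gp_le (proj1_sig a) (proj1_sig b)).
  pose proof (Gp_le (proj1_sig b) (proj1_sig a)). rewrite Gp_sym in H1.
  assert (lam (proj1_sig a) = lam (proj1_sig b)) by (rewrite !vlev; f_equal; auto).
  unfold Gp in *. pose proof (dnn (proj1_sig a) (proj1_sig b)). lra.
Qed.

Notation W := (walk esrc etgt).
Lemma walk_app u w v n m : W u w n -> W w v m -> W u v (n + m).
Proof. induction 1; simpl; auto. intros. econstructor; eauto. Qed.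
Lemma walk_rev u v n : W u v n -> W v u n.
Proof.
  induction 1. constructor.
  replace (S n) with (n + 1)%nat by lia. eapply walk_app; eauto.
  apply walk_cons with u. destruct H as [e [[h1 h2]|[h1 h2]]]; exists e; tauto. constructor.
Qed.

Lemma walk_lb u v n : W u v n -> (nlev u + nlev v <= n + 2 * K u v)%nat.
Proof.
  induction 1.
  - unfold nlev. lia.
  - destruct H as [e [[h1 h2]|[h1 h2]]]; subst.
    + pose proof (edge_lev e). pose proof (K_edge2 e v). lia.
    + pose proof (edge_lev e). pose proof (K_edge1 e v). lia.
Qed.

Lemma walk_down n : forall (u : V) k, nlev u = (k + n)%nat -> W u (VA u k) n.
Proof.
  induction n; intros u k h.
  - replace k with (nlev u) by lia. rewrite VA_top. constructor.
  - set (p := VA u (k + n)).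
    assert (hp : nlev p = (k + n)%nat) by (apply VA_nlev; lia).
    assert (hpv : proj1_sig p = A (proj1_sig u) (INR (k + n))) by (unfold p; apply VA_val; lia).
    assert (hr : 0 <= INR (k + n) <= lam (proj1_sig u)).
    { split. apply pos_INR. rewrite vlev, h. apply le_INR. lia. }
    assert (Ep : isE (p, u)).
    { unfold isE; cbn [fst snd]. rewrite hpv. rewrite A_lam, A_dist by auto. rewrite vlev, h.
      rewrite plus_INR, S_INR, plus_INR. split; lra. }
    apply walk_cons with p.
    + exists (exist _ (p, u) Ep). right. split; reflexivity.
    + assert (VA u k = VA p k) by (unfold p; rewrite VA_trans; auto; lia).
      rewrite H. apply IHn. lia.
Qed.

Lemma walk_K u v : W u v (nlev u + nlev v - 2 * K u v).
Proof.
  pose proof (K_le u v). pose proof (K_le v u). rewrite K_sym in H0.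
  assert (E1 : VA u (K u v) = VA v (K u v)).
  { apply Veq. rewrite !VA_val by auto. apply T4. split. apply pos_INR. apply K_Gp. }
  replace (nlev u + nlev v - 2 * K u v)%nat with ((nlev u - K u v) + (nlev v - K u v))%nat by lia.
  apply (walk_app _ (VA u (K u v))). apply walk_down. lia.
  rewrite E1. apply walk_rev. apply walk_down. lia.
Qed.

Lemma gdist_K u v : gdist esrc etgt u v = (nlev u + nlev v - 2 * K u v)%nat.
Proof.
  unfold gdist.
  set (P := fun n => W u v n /\ forall m, W u v m -> (n <= m)%nat).
  assert (ex : exists n, P n).
  { exists (nlev u + nlev v - 2 * K u v)%nat. split. apply walk_K.
    intros m hm. apply walk_lb in hm. lia. }
  destruct (epsilon_spec (inhabits 0%nat) P ex) as [h1 h2].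
  apply Nat.le_antisymm.
  - apply h2. apply walk_K.
  - apply walk_lb in h1. lia.
Qed.

Definition P := @rpoint V E.
Definition yp (p : P) : V := match p with RV v => v | RE e _ => etgt e end.
Definition ell (p : P) : R :=
  match p with RV v => INR (nlev v) | RE e t => INR (nlev (esrc e)) + proj1_sig t end.
Definition mu (p q : P) : R := Rmin (ell p) (Rmin (ell q) (INR (K (yp p) (yp q)))).

Lemma INR_min a b : INR (Nat.min a b) = Rmin (INR a) (INR b).
Proof.
  destruct (Nat.le_ge_cases a b).
  - rewrite Nat.min_l by auto. unfold Rmin. destruct Rle_dec; [auto|apply le_INR in H; lra].
  - rewrite Nat.min_r by auto. unfold Rmin. destruct Rle_dec; [apply le_INR in H; lra|auto].
Qed.

Lemma gdR u v : INR (gdist esrc etgt u v) = INR (nlev u) + INR (nlev v) - 2 * INR (K u v).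
Proof.
  rewrite gdist_K. pose proof (K_le u v). pose proof (K_le v u). rewrite K_sym in H0.
  rewrite minus_INR by lia. rewrite plus_INR, mult_INR. simpl (INR 2). lra.
Qed.

Lemma K_src e b : K (esrc e) b = Nat.min (nlev (esrc e)) (K (etgt e) b).
Proof.
  rewrite (edge_src e) at 1. apply K_anc. rewrite edge_lev. lia.
Qed.

Lemma ell_bounds p : INR (nlev (yp p)) - 1 < ell p <= INR (nlev (yp p)).
Proof.
  destruct p as [v|e [t ht]]; simpl. lra.
  rewrite edge_lev, S_INR. lra.
Qed.
Lemma ell_nn p : 0 <= ell p.
Proof. destruct p as [v|e [t ht]]; simpl. apply pos_INR. pose proof (pos_INR (nlev (esrc e))); lra. Qed.

Ltac rmin_lra := unfold Rmin; repeat match goal with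
  | |- context [Rle_dec ?a ?b] =>
      lazymatch a with context [Rle_dec] => fail | _ =>
      lazymatch b with context [Rle_dec] => fail | _ => destruct (Rle_dec a b) end end end; lra.

Lemma Hd_formula p q : pdist esrc etgt p q = ell p + ell q - 2 * mu p q.
Proof.
  unfold mu.
  destruct p as [u|e [t ht]]; destruct q as [v|e' [t' ht']].
  - unfold pdist, via, ends, minl; cbn [flat_map map fold_right fst snd app ell yp].
    rewrite gdR. pose proof (K_le u v). pose proof (K_le v u). rewrite K_sym in H0.
    apply le_INR in H. apply le_INR in H0. rmin_lra.
  - rename e' into e. rename t' into t. rename ht' into ht.
    unfold pdist, via, ends, minl; cbn [flat_map map fold_right fst snd app ell yp proj1_sig].
    rewrite !gdR. rewrite (K_sym u (esrc e)), K_src, INR_min, (K_sym (etgt e) u).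
    pose proof (edge_lev e) as L. rewrite L. rewrite S_INR.
    pose proof (K_le u (etgt e)) as h1. pose proof (K_le (etgt e) u) as h2. rewrite K_sym in h2.
    rewrite L in h2.
    assert (C : (K u (etgt e) <= nlev (esrc e))%nat \/ K u (etgt e) = S (nlev (esrc e))) by lia.
    apply le_INR in h1.
    destruct C as [C|C]; [apply le_INR in C| rewrite C in *; rewrite S_INR in *]; rmin_lra.
  - unfold pdist, via, ends, minl; cbn [flat_map map fold_right fst snd app ell yp proj1_sig].
    rewrite !gdR. rewrite K_src, INR_min.
    pose proof (edge_lev e) as L. rewrite L. rewrite S_INR.
    pose proof (K_le v (etgt e)) as h1. pose proof (K_le (etgt e) v) as h2. rewrite K_sym in h1.
    rewrite L in h2.
    assert (C : (K (etgt e) v <= nlev (esrc e))%nat \/ K (etgt e) v = S (nlev (esrc e))) by lia.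
    apply le_INR in h1.
    destruct C as [C|C]; [apply le_INR in C| rewrite C in *; rewrite S_INR in *]; rmin_lra.
  - unfold pdist. destruct (excluded_middle_informative (e = e')) as [h|h].
    + subst e'. cbn [ell yp proj1_sig]. change (K (etgt e) (etgt e)) with (nlev (etgt e)).
      rewrite edge_lev, S_INR. unfold Rabs; destruct Rcase_abs; rmin_lra.
    + unfold via, ends, minl; cbn [flat_map map fold_right fst snd app ell yp proj1_sig].
      rewrite !gdR.
      rewrite (K_src e (esrc e')), (K_sym (etgt e) (esrc e')), (K_src e' (etgt e)).
      rewrite (K_src e (etgt e')).
      rewrite (K_sym (etgt e') (etgt e)).
      set (k := K (etgt e) (etgt e')).
      set (a := nlev (esrc e)). set (b := nlev (esrc e')).
      pose proof (edge_lev e) as L. pose proof (edge_lev e') as L'. fold a in L. fold b in L'.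
      rewrite L, L'.
      assert (hk1 : (k <= S a)%nat) by (rewrite <- L; apply K_le).
      assert (hk2 : (k <= S b)%nat) by (rewrite <- L'; unfold k; rewrite K_sym; apply K_le).
      assert (hne : ~ (k = S a /\ k = S b)).
      { intros [c1 c2]. apply h. apply edge_uniq. apply K_full; fold k; lia. }
      assert (C : ((k <= a)%nat /\ (k <= b)%nat) \/ (k = S a /\ (k <= b)%nat) \/ (k = S b /\ (k <= a)%nat)) by lia.
      rewrite !S_INR.
      destruct C as [[c1 c2]|[[c1 c2]|[c1 c2]]].
      * rewrite (Nat.min_r b k) by auto. rewrite (Nat.min_r a k) by auto.
        apply le_INR in c1. apply le_INR in c2. rmin_lra.
      * rewrite (Nat.min_r b k) by auto. rewrite (Nat.min_l a k) by lia.
        rewrite c1 in *. rewrite S_INR. apply le_INR in c2. rewrite S_INR in c2. rmin_lra.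
      * rewrite (Nat.min_l b k) by lia. rewrite (Nat.min_r a k) by lia. rewrite (Nat.min_r a b) by lia.
        rewrite c1 in *. rewrite S_INR. apply le_INR in c2. rewrite S_INR in c2. rmin_lra.
Qed.

Ltac rmin_lra2 := unfold Rmin; repeat match goal with
  | |- context [Rle_dec ?a ?b] =>
      lazymatch a with context [Rle_dec] => fail | _ =>
      lazymatch b with context [Rle_dec] => fail | _ => destruct (Rle_dec a b) end end end; intros; lra.

Lemma mu_sym p q : mu p q = mu q p.
Proof. unfold mu. rewrite K_sym. rmin_lra. Qed.
Lemma mu_le p q : mu p q <= ell p.
Proof. unfold mu. rmin_lra. Qed.
Lemma mu_refl p : mu p p = ell p.
Proof.
  unfold mu. change (K (yp p) (yp p)) with (nlev (yp p)). pose proof (ell_bounds p). rmin_lra.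
Qed.
Lemma mu_nn p q : 0 <= mu p q.
Proof. unfold mu. pose proof (ell_nn p). pose proof (ell_nn q). pose proof (pos_INR (K (yp p) (yp q))). rmin_lra. Qed.
Lemma mu_um p q r : Rmin (mu p q) (mu q r) <= mu p r.
Proof.
  unfold mu. pose proof (K_um (yp p) (yp q) (yp r)) as h. apply le_INR in h. rewrite INR_min in h.
  revert h. rmin_lra2.
Qed.

Lemma mu_inj p q : mu p q = ell p -> ell p = ell q -> p = q.
Proof.
  intros h1 h2. unfold mu in h1.
  assert (hK : ell p <= INR (K (yp p) (yp q))) by (revert h1; rmin_lra2).
  pose proof (ell_bounds p) as [b1 b2]. pose proof (ell_bounds q) as [b3 b4].
  pose proof (K_le (yp p) (yp q)) as k1. pose proof (K_le (yp q) (yp p)) as k2. rewrite K_sym in k2.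
  assert (k3 : (nlev (yp p) <= K (yp p) (yp q))%nat).
  { assert (INR (nlev (yp p)) < INR (S (K (yp p) (yp q)))) by (rewrite S_INR; lra).
    apply INR_lt in H. lia. }
  assert (k4 : (nlev (yp q) <= K (yp p) (yp q))%nat).
  { assert (INR (nlev (yp q)) < INR (S (K (yp p) (yp q)))) by (rewrite S_INR; lra).
    apply INR_lt in H. lia. }
  assert (hy : yp p = yp q) by (apply K_full; lia).
  destruct p as [u|e [t ht]]; destruct q as [v|e' [t' ht']]; cbn [yp ell proj1_sig] in *.
  - congruence.
  - subst u. rewrite edge_lev, S_INR in h2. exfalso; lra.
  - subst v. rewrite edge_lev, S_INR in h2. exfalso; lra.
  - apply edge_uniq in hy. subst e'. assert (t = t') by lra. subst t'.
    f_equal. f_equal. apply proof_irrelevance.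
Qed.

Lemma mu_anc p r : 0 <= r <= ell p ->
  exists a, ell a = r /\ forall q, mu a q = Rmin r (mu p q).
Proof.
  intros hr. set (y := yp p). pose proof (ell_bounds p) as [b1 b2]. fold y in b1, b2.
  set (n := fl r). pose proof (fl_spec r (proj1 hr)) as [f1 f2]. fold n in f1, f2.
  assert (hn : (n <= nlev y)%nat) by (apply INR_le; lra).
  destruct (Req_dec (INR n) r) as [E1|E1].
  - exists (RV (VA y n)). split. simpl. rewrite VA_nlev; auto.
    intros q. unfold mu. simpl (yp (RV _)). simpl (ell (RV _)). rewrite VA_nlev by auto.
    rewrite K_anc, INR_min by auto. fold y. rmin_lra.
  - assert (hlt : INR n < r) by (destruct (Rle_lt_or_eq_dec _ _ f1); [auto|contradiction]).
    assert (hn2 : (S n <= nlev y)%nat) by (apply INR_lt; lra).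
    assert (Ee : isE (VA y n, VA y (S n))).
    { unfold isE; cbn [fst snd]. rewrite !VA_val by lia. rewrite !A_lam. rewrite A_d. rewrite S_INR.
      rewrite Rabs_left1; lra.
      all: split; [apply pos_INR|rewrite vlev; apply le_INR; lia]. }
    assert (ht : 0 < r - INR n < 1) by lra.
    exists (RE (exist _ _ Ee) (exist _ (r - INR n) ht)). split.
    + simpl. unfold esrc; simpl. rewrite VA_nlev by lia. lra.
    + intros q. unfold mu. simpl (yp (RE _ _)). simpl (ell (RE _ _)). unfold etgt, esrc; simpl.
      rewrite VA_nlev by lia. rewrite K_anc, INR_min by auto. fold y. rewrite S_INR. rmin_lra.
Qed.

Lemma pdist_rtree : R_tree (pdist esrc etgt).
Proof.
  apply (rooted_rtree _ _ ell mu).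
  - exact Hd_formula.
  - exact mu_sym.
  - exact mu_le.
  - exact mu_refl.
  - exact mu_nn.
  - exact mu_um.
  - exact mu_inj.
  - exact mu_anc.
Qed.

Lemma simp_tree : simplicial_tree esrc etgt.
Proof.
  split; [|split; [|split]].
  - intros e h. pose proof (edge_lev e). rewrite h in H. lia.
  - intros e e' [[h1 h2]|[h1 h2]].
    + apply edge_uniq; auto.
    + exfalso. pose proof (edge_lev e). pose proof (edge_lev e'). rewrite h1 in *. rewrite h2 in *. lia.
  - intros u v. eexists. apply walk_K.
  - apply pdist_rtree.
Qed.

Definition fmap (p : P) : T :=
  match p with RV v => proj1_sig v | RE e t => A (proj1_sig (etgt e)) (INR (nlev (esrc e)) + proj1_sig t) end.

Lemma ell_range p : 0 <= ell p <= lam (proj1_sig (yp p)).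
Proof. split. apply ell_nn. rewrite vlev. apply ell_bounds. Qed.

Lemma fmap_A p : fmap p = A (proj1_sig (yp p)) (ell p).
Proof.
  destruct p as [v|e t]; simpl; auto. rewrite <- vlev. symmetry; apply A_top.
Qed.
Lemma fmap_lam p : lam (fmap p) = ell p.
Proof. rewrite fmap_A. apply A_lam. apply ell_range. Qed.

Lemma mu_Gp p q : mu p q <= Gp (fmap p) (fmap q) < mu p q + 1.
Proof.
  pose proof (ell_range p) as rp. pose proof (ell_range q) as rq.
  pose proof (mu_le p q) as m1. pose proof (mu_le q p) as m2. rewrite mu_sym in m2.
  pose proof (mu_nn p q) as m0.
  assert (m3 : mu p q <= INR (K (yp p) (yp q))) by (unfold mu; rmin_lra).
  split.
  - apply common_G.
    + rewrite fmap_lam. lra.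
    + rewrite fmap_lam. lra.
    + rewrite !fmap_A. rewrite !A_trans by lra.
      apply T4. split; auto. eapply Rle_trans; [apply m3|apply K_Gp].
  - assert (g1 : Gp (fmap p) (fmap q) <= ell p) by (rewrite <- fmap_lam; apply Gp_le).
    assert (g2 : Gp (fmap p) (fmap q) <= ell q) by (rewrite <- (fmap_lam q), Gp_sym; apply Gp_le).
    assert (g3 : Gp (fmap p) (fmap q) <= Gp (proj1_sig (yp p)) (proj1_sig (yp q))).
    { eapply Rle_trans. apply Gp_down with (y := proj1_sig (yp p)).
      rewrite fmap_lam, fmap_A, A_dist by auto. lra.
      rewrite Gp_sym, (Gp_sym (proj1_sig (yp p))). apply Gp_down.
      rewrite fmap_lam, fmap_A, A_dist by auto. lra. }
    assert (g4 : Gp (proj1_sig (yp p)) (proj1_sig (yp q)) < INR (K (yp p) (yp q)) + 1).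
    { apply fl_spec. apply Gp_nn. }
    unfold mu in *. rmin_lra.
Qed.

Lemma qi : quasi_isometry_1C (pdist esrc etgt) d fmap 2.
Proof.
  split.
  - intros p q. rewrite Hd_formula. pose proof (mu_Gp p q).
    assert (d (fmap p) (fmap q) = ell p + ell q - 2 * Gp (fmap p) (fmap q))
      by (unfold Gp; rewrite !fmap_lam; lra).
    lra.
  - intros z. set (n := fl (lam z)).
    pose proof (fl_spec (lam z) (lam_nn z)) as [f1 f2]. fold n in f1, f2.
    assert (hl : lam (A z (INR n)) = INR n) by (apply A_lam; split; [apply pos_INR|lra]).
    exists (RV (exist _ (A z (INR n)) (ex_intro _ n hl))). simpl.
    rewrite dsym, A_dist by (split; [apply pos_INR|lra]). lra.
Qed.

Lemma main_inh : exists (V E : Type) (src tgt : E -> V),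
    simplicial_tree src tgt /\
    exists f : rpoint (V:=V) (E:=E) -> T,
      quasi_isometry_1C (pdist src tgt) d f 2.
Proof. exists V, E, esrc, etgt. split. apply simp_tree. exists fmap. apply qi. Qed.

End TF.

Theorem proposition4p5 :
  forall (T : Type) (d : T -> T -> R), R_tree d ->
  exists (V E : Type) (src tgt : E -> V),
    simplicial_tree src tgt /\
    exists f : rpoint (V:=V) (E:=E) -> T,
      quasi_isometry_1C (pdist src tgt) d f 2.
Proof.
  intros T d Hrt. destruct (classic (inhabited T)) as [[o]|hne].
  - exact (main_inh T d Hrt o).
  - exists Empty_set, Empty_set, (fun e : Empty_set => match e return Empty_set with end), (fun e : Empty_set => match e return Empty_set with end).
    split.
    + split; [intros e; destruct e|split; [intros e; destruct e|split; [intros u; destruct u|]]].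
      split. split; [intros x; destruct x as [x|x]; destruct x|].
      split; [intros x; destruct x as [x|x]; destruct x|].
      split; intros x; destruct x as [x|x]; destruct x.
      intros x; destruct x as [x|x]; destruct x.
    + exists (fun p : @rpoint Empty_set Empty_set => match p return T with RV v => match v return T with end | RE e _ => match e return T with end end).
      split. intros a; destruct a as [a|a]; destruct a.
      intros y. exfalso. apply hne. exact (inhabits y).
Qed.
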